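(* Let $G^{\boldsymbol{w}}$ be the graph defined in the context. Then $L\subseteq\mathrm{Aut}(G^{\boldsymbol{w}})$. Moreover, for $v_x\in V_i$ and $v_y\in V_j$, we have $(v_x,v_y)\notin E(G^{\boldsymbol{w}})$ if and only if there exists $\sigma\in L$ with $\sigma(v_{w_i})=v_x$ and $\sigma(v_{w_j})=v_y$.
   Context: The $E_8$ root system $\Psi_{E_8}\subset\mathbb{R}^8$ consists of the 240 vectors $\pm e_i\pm e_j$ ($1\le i<j\le 8$) and all $x\in\{\pm1\}^8$ with $\prod_i x_i=1$. $G_{E_8}$ is the graph with vertices $v_x$, $x\in\Psi_{E_8}$, where $v_x=v_{-x}$, and $v_x\sim v_y$ iff $\langle x,y\rangle=0$. Let $I=\mathrm{diag}(1,1)$, $X=\begin{pmatrix}0&1\\1&0\end{pmatrix}$, $Z=\mathrm{diag}(1,-1)$, $Y=XZ$. For $M=M_1\otimes M_2\otimes M_3$ with $M_i\in\{I,X,Y,Z\}$, $\sigma_M:v_x\mapsto v_{Mx}$ is an automorphism of $G_{E_8}$ and $L=\{\sigma_M\}\cong\mathbb{Z}_2^6$. Let $V_1,\dots,V_{15}$ be the 15 orbits of $L$ on $V(G_{E_8})$ (each of size 8). For each $i$ choose $w_i\in\Psi_{E_8}$ with $v_{w_i}\in V_i$, and let $\boldsymbol{w}=\{w_1,\dots,w_{15}\}$. The graph $G^{\boldsymbol{w}}$ has vertex set $V(G_{E_8})$; for $s\in V_i$, $t\in V_j$: if $\langle w_i,w_j\rangle\neq0$ then $s\sim t$ in $G^{\boldsymbol{w}}$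 iff $s\sim t$ in $G_{E_8}$; if $\langle w_i,w_j\rangle=0$ then $s\sim t$ in $G^{\boldsymbol{w}}$ iff $s\not\sim t$ in $G_{E_8}$. *)

(* Defs.v *)
From HB Require Import structures.
From mathcomp Require Import all_boot all_order all_algebra.
Set Implicit Arguments. Unset Strict Implicit. Unset Printing Implicit Defensive.
Import Order.TTheory GRing.Theory Num.Theory.
Local Open Scope ring_scope.

(* Vectors of R^8 with integer coordinates (all E8 roots here are integral),
   as column vectors; coordinate e_1..e_8 is index 0..7. *)
Definition vec := 'cV[int]_8.

Definition dot (x y : vec) : int := \sum_(i < 8) x i 0 * y i 0.

Definition is_root (x : vec) : bool :=
  [exists i : 'I_8, exists j : 'I_8,
     (i < j)%N && [forall k : 'I_8,
        if k == i then (x k 0 == 1) || (x k 0 == -1)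
        else if k == j then (x k 0 == 1) || (x k 0 == -1)
        else x k 0 == 0]]
  || ([forall k : 'I_8, (x k 0 == 1) || (x k 0 == -1)]
      && (\prod_(k < 8) x k 0 == 1)).

(* v_x = v_y  iff  y = x or y = -x *)
Definition same_vertex (x y : vec) : bool := (y == x) || (y == - x).

Definition adjE8 (x y : vec) : bool := dot x y == 0.

Definition matI : 'M[int]_2 := 1%:M.
Definition matX : 'M[int]_2 := \matrix_(i < 2, j < 2) (if i == j then 0 else 1).
Definition matZ : 'M[int]_2 := \matrix_(i < 2, j < 2)
  (if i == j then (if i == 0 :> nat then 1 else -1) else 0).
Definition matY : 'M[int]_2 := matX *m matZ.

Definition pauli (k : 'I_4) : 'M[int]_2 :=
  match val k with 0 => matI | 1 => matX | 2 => matY | _ => matZ end.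

Definition bit1 (i : 'I_8) : 'I_2 := inord (i %/ 4).
Definition bit2 (i : 'I_8) : 'I_2 := inord ((i %/ 2) %% 2).
Definition bit3 (i : 'I_8) : 'I_2 := inord (i %% 2).

Definition kron3 (A B C : 'M[int]_2) : 'M[int]_8 :=
  \matrix_(i < 8, j < 8)
    (A (bit1 i) (bit1 j) * B (bit2 i) (bit2 j) * C (bit3 i) (bit3 j)).

(* index type of the elements sigma_M of L: M = M1 (x) M2 (x) M3 *)
Definition Lidx := ('I_4 * 'I_4 * 'I_4)%type.
Definition Lmat (k : Lidx) : 'M[int]_8 :=
  kron3 (pauli k.1.1) (pauli k.1.2) (pauli k.2).

Definition Lmaps (k : Lidx) (a x : vec) : bool := same_vertex (Lmat k *m a) x.

Definition inLorbit (a x : vec) : bool := [exists k : Lidx, Lmaps k a x].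

(* V_i is the orbit of v_{w_i}. *)
Definition Ltransversal (w : 'I_15 -> vec) : Prop :=
  [/\ forall i, is_root (w i),
      forall x, is_root x -> exists i, inLorbit (w i) x
    & forall i j, inLorbit (w i) (w j) -> i = j].

Definition adjGw (w : 'I_15 -> vec) (s t : vec) : bool :=
  [exists i : 'I_15, exists j : 'I_15,
     [&& inLorbit (w i) s, inLorbit (w j) t &
         if dot (w i) (w j) != 0 then adjE8 s t else ~~ adjE8 s t]].

(* Main.v *)
Require Import Defs.
From HB Require Import structures.
From mathcomp Require Import all_boot all_order all_algebra.
From mathcomp Require Import zify.
Import Order.TTheory GRing.Theory Num.Theory.
Local Open Scope ring_scope.

Definition p1 : int := Posz 1.
Definition m1 : int := Negz 0.
Definition z0 : int := Posz 0.
Definition I8 : seq nat := iota 0 8.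
Definition sumL (s : seq int) : int := foldr (fun a b => a + b) 0 s.
Definition prodL (s : seq int) : int := foldr (fun a b => a * b) 1 s.

Definition o4 (n : nat) : 'I_4 :=
  match n with 0 => @Ordinal 4 0 isT | 1 => @Ordinal 4 1 isT
  | 2 => @Ordinal 4 2 isT | _ => @Ordinal 4 3 isT end.
Definition ords4 := [:: o4 0; o4 1; o4 2; o4 3].
Definition enumL : seq Lidx :=
  [seq (ab, c) | ab <- [seq (a, b) | a <- ords4, b <- ords4], c <- ords4].
Definition x4 (a b : 'I_4) : 'I_4 :=
  o4 (((a %% 2 + b %% 2) %% 2) + 2 * ((a %/ 2 + b %/ 2) %% 2))%N.
Definition kx (k k' : Lidx) : Lidx := (x4 k.1.1 k'.1.1, x4 k.1.2 k'.1.2, x4 k.2 k'.2).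
Definition k0 : Lidx := (o4 0, o4 0, o4 0).

Definition pc (p : 'I_4) (a b : nat) : int :=
 match val p with
 | 0 => if a == b then p1 else z0
 | 1 => if a == b then z0 else p1
 | 2 => if a == b then z0 else if b == 0%N then p1 else m1
 | _ => if a == b then (if a == 0%N then p1 else m1) else z0
 end.
Definition lmcn (k : Lidx) (i j : nat) : int :=
  pc k.1.1 (i %/ 4) (j %/ 4) * pc k.1.2 ((i %/ 2) %% 2) ((j %/ 2) %% 2)
  * pc k.2 (i %% 2) (j %% 2).
Definition pp (p : 'I_4) (a : nat) : nat := if (val p == 1%N) || (val p == 2%N) then (1 - a)%N else a.
Definition prm (k : Lidx) (i : nat) : nat :=
  (4 * pp k.1.1 (i %/ 4) + 2 * pp k.1.2 ((i %/ 2) %% 2) + pp k.2 (i %% 2))%N.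
Definition sgn (k : Lidx) (i : nat) : int := lmcn k i (prm k i).
Definition rowtab (k : Lidx) : seq (int * nat) := [seq (sgn k i, prm k i) | i <- I8].
Definition appf (t : seq (int * nat)) (r : seq int) : seq int := [seq p.1 * nth 0 r p.2 | p <- t].
Definition appl k r := appf (rowtab k) r.
Definition dotl (a b : seq int) : int := sumL [seq nth 0 a i * nth 0 b i | i <- I8].
Definition svl (a b : seq int) : bool := (b == a) || (b == [seq - z | z <- a]).
Definition pm1 (z : int) : bool := (z == p1) || (z == m1).
Definition isrl (r : seq int) : bool :=
  has (fun i => has (fun j => (i < j)%N && all (fun k =>
     if k == i then pm1 (nth 0 r k) else if k == j then pm1 (nth 0 r k)
     else nth 0 r k == z0) I8) I8) I8
  || (all (fun k => pm1 (nth 0 r k)) I8 && (prodL [seq nth 0 r k | k <- I8] == p1)).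
Fixpoint allseqs (n : nat) : seq (seq int) :=
  if n is n'.+1 then [seq a :: s | a <- [:: m1; z0; p1], s <- allseqs n'] else [:: [::]].
Definition roots := [seq r <- allseqs 8 | isrl r].
Definition reps : seq (seq int) := [:: [:: m1; m1; z0; z0; z0; z0; z0; z0];
  [:: m1; z0; m1; z0; z0; z0; z0; z0];
  [:: m1; z0; z0; m1; z0; z0; z0; z0];
  [:: m1; z0; z0; z0; m1; z0; z0; z0];
  [:: m1; z0; z0; z0; z0; m1; z0; z0];
  [:: m1; z0; z0; z0; z0; z0; m1; z0];
  [:: m1; z0; z0; z0; z0; z0; z0; m1];
  [:: m1; m1; m1; m1; m1; m1; m1; m1];
  [:: m1; m1; m1; m1; m1; m1; p1; p1];
  [:: m1; m1; m1; m1; m1; p1; m1; p1];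
  [:: m1; m1; m1; m1; m1; p1; p1; m1];
  [:: m1; m1; m1; p1; m1; m1; m1; p1];
  [:: m1; m1; m1; p1; m1; m1; p1; m1];
  [:: m1; m1; m1; p1; m1; p1; m1; m1];
  [:: m1; m1; m1; p1; m1; p1; p1; p1] ].
Definition rootsL : seq (seq int) := [:: [:: m1; m1; m1; m1; m1; m1; m1; m1];
  [:: m1; m1; m1; m1; m1; m1; p1; p1];
  [:: m1; m1; m1; m1; m1; p1; m1; p1];
  [:: m1; m1; m1; m1; m1; p1; p1; m1];
  [:: m1; m1; m1; m1; p1; m1; m1; p1];
  [:: m1; m1; m1; m1; p1; m1; p1; m1];
  [:: m1; m1; m1; m1; p1; p1; m1; m1];
  [:: m1; m1; m1; m1; p1; p1; p1; p1];
  [:: m1; m1; m1; p1; m1; m1; m1; p1];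
  [:: m1; m1; m1; p1; m1; m1; p1; m1];
  [:: m1; m1; m1; p1; m1; p1; m1; m1];
  [:: m1; m1; m1; p1; m1; p1; p1; p1];
  [:: m1; m1; m1; p1; p1; m1; m1; m1];
  [:: m1; m1; m1; p1; p1; m1; p1; p1];
  [:: m1; m1; m1; p1; p1; p1; m1; p1];
  [:: m1; m1; m1; p1; p1; p1; p1; m1];
  [:: m1; m1; z0; z0; z0; z0; z0; z0];
  [:: m1; m1; p1; m1; m1; m1; m1; p1];
  [:: m1; m1; p1; m1; m1; m1; p1; m1];
  [:: m1; m1; p1; m1; m1; p1; m1; m1];
  [:: m1; m1; p1; m1; m1; p1; p1; p1];
  [:: m1; m1; p1; m1; p1; m1; m1; m1];
  [:: m1; m1; p1; m1; p1; m1; p1; p1];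
  [:: m1; m1; p1; m1; p1; p1; m1; p1];
  [:: m1; m1; p1; m1; p1; p1; p1; m1];
  [:: m1; m1; p1; p1; m1; m1; m1; m1];
  [:: m1; m1; p1; p1; m1; m1; p1; p1];
  [:: m1; m1; p1; p1; m1; p1; m1; p1];
  [:: m1; m1; p1; p1; m1; p1; p1; m1];
  [:: m1; m1; p1; p1; p1; m1; m1; p1];
  [:: m1; m1; p1; p1; p1; m1; p1; m1];
  [:: m1; m1; p1; p1; p1; p1; m1; m1];
  [:: m1; m1; p1; p1; p1; p1; p1; p1];
  [:: m1; z0; m1; z0; z0; z0; z0; z0];
  [:: m1; z0; z0; m1; z0; z0; z0; z0];
  [:: m1; z0; z0; z0; m1; z0; z0; z0];
  [:: m1; z0; z0; z0; z0; m1; z0; z0];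
  [:: m1; z0; z0; z0; z0; z0; m1; z0];
  [:: m1; z0; z0; z0; z0; z0; z0; m1];
  [:: m1; z0; z0; z0; z0; z0; z0; p1];
  [:: m1; z0; z0; z0; z0; z0; p1; z0];
  [:: m1; z0; z0; z0; z0; p1; z0; z0];
  [:: m1; z0; z0; z0; p1; z0; z0; z0];
  [:: m1; z0; z0; p1; z0; z0; z0; z0];
  [:: m1; z0; p1; z0; z0; z0; z0; z0];
  [:: m1; p1; m1; m1; m1; m1; m1; p1];
  [:: m1; p1; m1; m1; m1; m1; p1; m1];
  [:: m1; p1; m1; m1; m1; p1; m1; m1];
  [:: m1; p1; m1; m1; m1; p1; p1; p1];
  [:: m1; p1; m1; m1; p1; m1; m1; m1];
  [:: m1; p1; m1; m1; p1; m1; p1; p1];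
  [:: m1; p1; m1; m1; p1; p1; m1; p1];
  [:: m1; p1; m1; m1; p1; p1; p1; m1];
  [:: m1; p1; m1; p1; m1; m1; m1; m1];
  [:: m1; p1; m1; p1; m1; m1; p1; p1];
  [:: m1; p1; m1; p1; m1; p1; m1; p1];
  [:: m1; p1; m1; p1; m1; p1; p1; m1];
  [:: m1; p1; m1; p1; p1; m1; m1; p1];
  [:: m1; p1; m1; p1; p1; m1; p1; m1];
  [:: m1; p1; m1; p1; p1; p1; m1; m1];
  [:: m1; p1; m1; p1; p1; p1; p1; p1];
  [:: m1; p1; z0; z0; z0; z0; z0; z0];
  [:: m1; p1; p1; m1; m1; m1; m1; m1];
  [:: m1; p1; p1; m1; m1; m1; p1; p1];
  [:: m1; p1; p1; m1; m1; p1; m1; p1];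
  [:: m1; p1; p1; m1; m1; p1; p1; m1];
  [:: m1; p1; p1; m1; p1; m1; m1; p1];
  [:: m1; p1; p1; m1; p1; m1; p1; m1];
  [:: m1; p1; p1; m1; p1; p1; m1; m1];
  [:: m1; p1; p1; m1; p1; p1; p1; p1];
  [:: m1; p1; p1; p1; m1; m1; m1; p1];
  [:: m1; p1; p1; p1; m1; m1; p1; m1];
  [:: m1; p1; p1; p1; m1; p1; m1; m1];
  [:: m1; p1; p1; p1; m1; p1; p1; p1];
  [:: m1; p1; p1; p1; p1; m1; m1; m1];
  [:: m1; p1; p1; p1; p1; m1; p1; p1];
  [:: m1; p1; p1; p1; p1; p1; m1; p1];
  [:: m1; p1; p1; p1; p1; p1; p1; m1];
  [:: z0; m1; m1; z0; z0; z0; z0; z0];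
  [:: z0; m1; z0; m1; z0; z0; z0; z0];
  [:: z0; m1; z0; z0; m1; z0; z0; z0];
  [:: z0; m1; z0; z0; z0; m1; z0; z0];
  [:: z0; m1; z0; z0; z0; z0; m1; z0];
  [:: z0; m1; z0; z0; z0; z0; z0; m1];
  [:: z0; m1; z0; z0; z0; z0; z0; p1];
  [:: z0; m1; z0; z0; z0; z0; p1; z0];
  [:: z0; m1; z0; z0; z0; p1; z0; z0];
  [:: z0; m1; z0; z0; p1; z0; z0; z0];
  [:: z0; m1; z0; p1; z0; z0; z0; z0];
  [:: z0; m1; p1; z0; z0; z0; z0; z0];
  [:: z0; z0; m1; m1; z0; z0; z0; z0];
  [:: z0; z0; m1; z0; m1; z0; z0; z0];
  [:: z0; z0; m1; z0; z0; m1; z0; z0];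
  [:: z0; z0; m1; z0; z0; z0; m1; z0];
  [:: z0; z0; m1; z0; z0; z0; z0; m1];
  [:: z0; z0; m1; z0; z0; z0; z0; p1];
  [:: z0; z0; m1; z0; z0; z0; p1; z0];
  [:: z0; z0; m1; z0; z0; p1; z0; z0];
  [:: z0; z0; m1; z0; p1; z0; z0; z0];
  [:: z0; z0; m1; p1; z0; z0; z0; z0];
  [:: z0; z0; z0; m1; m1; z0; z0; z0];
  [:: z0; z0; z0; m1; z0; m1; z0; z0];
  [:: z0; z0; z0; m1; z0; z0; m1; z0];
  [:: z0; z0; z0; m1; z0; z0; z0; m1];
  [:: z0; z0; z0; m1; z0; z0; z0; p1];
  [:: z0; z0; z0; m1; z0; z0; p1; z0];
  [:: z0; z0; z0; m1; z0; p1; z0; z0];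
  [:: z0; z0; z0; m1; p1; z0; z0; z0];
  [:: z0; z0; z0; z0; m1; m1; z0; z0];
  [:: z0; z0; z0; z0; m1; z0; m1; z0];
  [:: z0; z0; z0; z0; m1; z0; z0; m1];
  [:: z0; z0; z0; z0; m1; z0; z0; p1];
  [:: z0; z0; z0; z0; m1; z0; p1; z0];
  [:: z0; z0; z0; z0; m1; p1; z0; z0];
  [:: z0; z0; z0; z0; z0; m1; m1; z0];
  [:: z0; z0; z0; z0; z0; m1; z0; m1];
  [:: z0; z0; z0; z0; z0; m1; z0; p1];
  [:: z0; z0; z0; z0; z0; m1; p1; z0];
  [:: z0; z0; z0; z0; z0; z0; m1; m1];
  [:: z0; z0; z0; z0; z0; z0; m1; p1];
  [:: z0; z0; z0; z0; z0; z0; p1; m1];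
  [:: z0; z0; z0; z0; z0; z0; p1; p1];
  [:: z0; z0; z0; z0; z0; p1; m1; z0];
  [:: z0; z0; z0; z0; z0; p1; z0; m1];
  [:: z0; z0; z0; z0; z0; p1; z0; p1];
  [:: z0; z0; z0; z0; z0; p1; p1; z0];
  [:: z0; z0; z0; z0; p1; m1; z0; z0];
  [:: z0; z0; z0; z0; p1; z0; m1; z0];
  [:: z0; z0; z0; z0; p1; z0; z0; m1];
  [:: z0; z0; z0; z0; p1; z0; z0; p1];
  [:: z0; z0; z0; z0; p1; z0; p1; z0];
  [:: z0; z0; z0; z0; p1; p1; z0; z0];
  [:: z0; z0; z0; p1; m1; z0; z0; z0];
  [:: z0; z0; z0; p1; z0; m1; z0; z0];
  [:: z0; z0; z0; p1; z0; z0; m1; z0];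
  [:: z0; z0; z0; p1; z0; z0; z0; m1];
  [:: z0; z0; z0; p1; z0; z0; z0; p1];
  [:: z0; z0; z0; p1; z0; z0; p1; z0];
  [:: z0; z0; z0; p1; z0; p1; z0; z0];
  [:: z0; z0; z0; p1; p1; z0; z0; z0];
  [:: z0; z0; p1; m1; z0; z0; z0; z0];
  [:: z0; z0; p1; z0; m1; z0; z0; z0];
  [:: z0; z0; p1; z0; z0; m1; z0; z0];
  [:: z0; z0; p1; z0; z0; z0; m1; z0];
  [:: z0; z0; p1; z0; z0; z0; z0; m1];
  [:: z0; z0; p1; z0; z0; z0; z0; p1];
  [:: z0; z0; p1; z0; z0; z0; p1; z0];
  [:: z0; z0; p1; z0; z0; p1; z0; z0];
  [:: z0; z0; p1; z0; p1; z0; z0; z0];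
  [:: z0; z0; p1; p1; z0; z0; z0; z0];
  [:: z0; p1; m1; z0; z0; z0; z0; z0];
  [:: z0; p1; z0; m1; z0; z0; z0; z0];
  [:: z0; p1; z0; z0; m1; z0; z0; z0];
  [:: z0; p1; z0; z0; z0; m1; z0; z0];
  [:: z0; p1; z0; z0; z0; z0; m1; z0];
  [:: z0; p1; z0; z0; z0; z0; z0; m1];
  [:: z0; p1; z0; z0; z0; z0; z0; p1];
  [:: z0; p1; z0; z0; z0; z0; p1; z0];
  [:: z0; p1; z0; z0; z0; p1; z0; z0];
  [:: z0; p1; z0; z0; p1; z0; z0; z0];
  [:: z0; p1; z0; p1; z0; z0; z0; z0];
  [:: z0; p1; p1; z0; z0; z0; z0; z0];
  [:: p1; m1; m1; m1; m1; m1; m1; p1];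
  [:: p1; m1; m1; m1; m1; m1; p1; m1];
  [:: p1; m1; m1; m1; m1; p1; m1; m1];
  [:: p1; m1; m1; m1; m1; p1; p1; p1];
  [:: p1; m1; m1; m1; p1; m1; m1; m1];
  [:: p1; m1; m1; m1; p1; m1; p1; p1];
  [:: p1; m1; m1; m1; p1; p1; m1; p1];
  [:: p1; m1; m1; m1; p1; p1; p1; m1];
  [:: p1; m1; m1; p1; m1; m1; m1; m1];
  [:: p1; m1; m1; p1; m1; m1; p1; p1];
  [:: p1; m1; m1; p1; m1; p1; m1; p1];
  [:: p1; m1; m1; p1; m1; p1; p1; m1];
  [:: p1; m1; m1; p1; p1; m1; m1; p1];
  [:: p1; m1; m1; p1; p1; m1; p1; m1];
  [:: p1; m1; m1; p1; p1; p1; m1; m1];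
  [:: p1; m1; m1; p1; p1; p1; p1; p1];
  [:: p1; m1; z0; z0; z0; z0; z0; z0];
  [:: p1; m1; p1; m1; m1; m1; m1; m1];
  [:: p1; m1; p1; m1; m1; m1; p1; p1];
  [:: p1; m1; p1; m1; m1; p1; m1; p1];
  [:: p1; m1; p1; m1; m1; p1; p1; m1];
  [:: p1; m1; p1; m1; p1; m1; m1; p1];
  [:: p1; m1; p1; m1; p1; m1; p1; m1];
  [:: p1; m1; p1; m1; p1; p1; m1; m1];
  [:: p1; m1; p1; m1; p1; p1; p1; p1];
  [:: p1; m1; p1; p1; m1; m1; m1; p1];
  [:: p1; m1; p1; p1; m1; m1; p1; m1];
  [:: p1; m1; p1; p1; m1; p1; m1; m1];
  [:: p1; m1; p1; p1; m1; p1; p1; p1];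
  [:: p1; m1; p1; p1; p1; m1; m1; m1];
  [:: p1; m1; p1; p1; p1; m1; p1; p1];
  [:: p1; m1; p1; p1; p1; p1; m1; p1];
  [:: p1; m1; p1; p1; p1; p1; p1; m1];
  [:: p1; z0; m1; z0; z0; z0; z0; z0];
  [:: p1; z0; z0; m1; z0; z0; z0; z0];
  [:: p1; z0; z0; z0; m1; z0; z0; z0];
  [:: p1; z0; z0; z0; z0; m1; z0; z0];
  [:: p1; z0; z0; z0; z0; z0; m1; z0];
  [:: p1; z0; z0; z0; z0; z0; z0; m1];
  [:: p1; z0; z0; z0; z0; z0; z0; p1];
  [:: p1; z0; z0; z0; z0; z0; p1; z0];
  [:: p1; z0; z0; z0; z0; p1; z0; z0];
  [:: p1; z0; z0; z0; p1; z0; z0; z0];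
  [:: p1; z0; z0; p1; z0; z0; z0; z0];
  [:: p1; z0; p1; z0; z0; z0; z0; z0];
  [:: p1; p1; m1; m1; m1; m1; m1; m1];
  [:: p1; p1; m1; m1; m1; m1; p1; p1];
  [:: p1; p1; m1; m1; m1; p1; m1; p1];
  [:: p1; p1; m1; m1; m1; p1; p1; m1];
  [:: p1; p1; m1; m1; p1; m1; m1; p1];
  [:: p1; p1; m1; m1; p1; m1; p1; m1];
  [:: p1; p1; m1; m1; p1; p1; m1; m1];
  [:: p1; p1; m1; m1; p1; p1; p1; p1];
  [:: p1; p1; m1; p1; m1; m1; m1; p1];
  [:: p1; p1; m1; p1; m1; m1; p1; m1];
  [:: p1; p1; m1; p1; m1; p1; m1; m1];
  [:: p1; p1; m1; p1; m1; p1; p1; p1];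
  [:: p1; p1; m1; p1; p1; m1; m1; m1];
  [:: p1; p1; m1; p1; p1; m1; p1; p1];
  [:: p1; p1; m1; p1; p1; p1; m1; p1];
  [:: p1; p1; m1; p1; p1; p1; p1; m1];
  [:: p1; p1; z0; z0; z0; z0; z0; z0];
  [:: p1; p1; p1; m1; m1; m1; m1; p1];
  [:: p1; p1; p1; m1; m1; m1; p1; m1];
  [:: p1; p1; p1; m1; m1; p1; m1; m1];
  [:: p1; p1; p1; m1; m1; p1; p1; p1];
  [:: p1; p1; p1; m1; p1; m1; m1; m1];
  [:: p1; p1; p1; m1; p1; m1; p1; p1];
  [:: p1; p1; p1; m1; p1; p1; m1; p1];
  [:: p1; p1; p1; m1; p1; p1; p1; m1];
  [:: p1; p1; p1; p1; m1; m1; m1; m1];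
  [:: p1; p1; p1; p1; m1; m1; p1; p1];
  [:: p1; p1; p1; p1; m1; p1; m1; p1];
  [:: p1; p1; p1; p1; m1; p1; p1; m1];
  [:: p1; p1; p1; p1; p1; m1; m1; p1];
  [:: p1; p1; p1; p1; p1; m1; p1; m1];
  [:: p1; p1; p1; p1; p1; p1; m1; m1];
  [:: p1; p1; p1; p1; p1; p1; p1; p1] ].
Definition tabL : seq (Lidx * seq (int * nat)) := [:: ((o4 0, o4 0, o4 0), [:: (p1, 0%N); (p1, 1%N); (p1, 2%N); (p1, 3%N); (p1, 4%N); (p1, 5%N); (p1, 6%N); (p1, 7%N)]);
  ((o4 0, o4 0, o4 1), [:: (p1, 1%N); (p1, 0%N); (p1, 3%N); (p1, 2%N); (p1, 5%N); (p1, 4%N); (p1, 7%N); (p1, 6%N)]);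
  ((o4 0, o4 0, o4 2), [:: (m1, 1%N); (p1, 0%N); (m1, 3%N); (p1, 2%N); (m1, 5%N); (p1, 4%N); (m1, 7%N); (p1, 6%N)]);
  ((o4 0, o4 0, o4 3), [:: (p1, 0%N); (m1, 1%N); (p1, 2%N); (m1, 3%N); (p1, 4%N); (m1, 5%N); (p1, 6%N); (m1, 7%N)]);
  ((o4 0, o4 1, o4 0), [:: (p1, 2%N); (p1, 3%N); (p1, 0%N); (p1, 1%N); (p1, 6%N); (p1, 7%N); (p1, 4%N); (p1, 5%N)]);
  ((o4 0, o4 1, o4 1), [:: (p1, 3%N); (p1, 2%N); (p1, 1%N); (p1, 0%N); (p1, 7%N); (p1, 6%N); (p1, 5%N); (p1, 4%N)]);
  ((o4 0, o4 1, o4 2), [:: (m1, 3%N); (p1, 2%N); (m1, 1%N); (p1, 0%N); (m1, 7%N); (p1, 6%N); (m1, 5%N); (p1, 4%N)]);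
  ((o4 0, o4 1, o4 3), [:: (p1, 2%N); (m1, 3%N); (p1, 0%N); (m1, 1%N); (p1, 6%N); (m1, 7%N); (p1, 4%N); (m1, 5%N)]);
  ((o4 0, o4 2, o4 0), [:: (m1, 2%N); (m1, 3%N); (p1, 0%N); (p1, 1%N); (m1, 6%N); (m1, 7%N); (p1, 4%N); (p1, 5%N)]);
  ((o4 0, o4 2, o4 1), [:: (m1, 3%N); (m1, 2%N); (p1, 1%N); (p1, 0%N); (m1, 7%N); (m1, 6%N); (p1, 5%N); (p1, 4%N)]);
  ((o4 0, o4 2, o4 2), [:: (p1, 3%N); (m1, 2%N); (m1, 1%N); (p1, 0%N); (p1, 7%N); (m1, 6%N); (m1, 5%N); (p1, 4%N)]);
  ((o4 0, o4 2, o4 3), [:: (m1, 2%N); (p1, 3%N); (p1, 0%N); (m1, 1%N); (m1, 6%N); (p1, 7%N); (p1, 4%N); (m1, 5%N)]);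
  ((o4 0, o4 3, o4 0), [:: (p1, 0%N); (p1, 1%N); (m1, 2%N); (m1, 3%N); (p1, 4%N); (p1, 5%N); (m1, 6%N); (m1, 7%N)]);
  ((o4 0, o4 3, o4 1), [:: (p1, 1%N); (p1, 0%N); (m1, 3%N); (m1, 2%N); (p1, 5%N); (p1, 4%N); (m1, 7%N); (m1, 6%N)]);
  ((o4 0, o4 3, o4 2), [:: (m1, 1%N); (p1, 0%N); (p1, 3%N); (m1, 2%N); (m1, 5%N); (p1, 4%N); (p1, 7%N); (m1, 6%N)]);
  ((o4 0, o4 3, o4 3), [:: (p1, 0%N); (m1, 1%N); (m1, 2%N); (p1, 3%N); (p1, 4%N); (m1, 5%N); (m1, 6%N); (p1, 7%N)]);
  ((o4 1, o4 0, o4 0), [:: (p1, 4%N); (p1, 5%N); (p1, 6%N); (p1, 7%N); (p1, 0%N); (p1, 1%N); (p1, 2%N); (p1, 3%N)]);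
  ((o4 1, o4 0, o4 1), [:: (p1, 5%N); (p1, 4%N); (p1, 7%N); (p1, 6%N); (p1, 1%N); (p1, 0%N); (p1, 3%N); (p1, 2%N)]);
  ((o4 1, o4 0, o4 2), [:: (m1, 5%N); (p1, 4%N); (m1, 7%N); (p1, 6%N); (m1, 1%N); (p1, 0%N); (m1, 3%N); (p1, 2%N)]);
  ((o4 1, o4 0, o4 3), [:: (p1, 4%N); (m1, 5%N); (p1, 6%N); (m1, 7%N); (p1, 0%N); (m1, 1%N); (p1, 2%N); (m1, 3%N)]);
  ((o4 1, o4 1, o4 0), [:: (p1, 6%N); (p1, 7%N); (p1, 4%N); (p1, 5%N); (p1, 2%N); (p1, 3%N); (p1, 0%N); (p1, 1%N)]);
  ((o4 1, o4 1, o4 1), [:: (p1, 7%N); (p1, 6%N); (p1, 5%N); (p1, 4%N); (p1, 3%N); (p1, 2%N); (p1, 1%N); (p1, 0%N)]);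
  ((o4 1, o4 1, o4 2), [:: (m1, 7%N); (p1, 6%N); (m1, 5%N); (p1, 4%N); (m1, 3%N); (p1, 2%N); (m1, 1%N); (p1, 0%N)]);
  ((o4 1, o4 1, o4 3), [:: (p1, 6%N); (m1, 7%N); (p1, 4%N); (m1, 5%N); (p1, 2%N); (m1, 3%N); (p1, 0%N); (m1, 1%N)]);
  ((o4 1, o4 2, o4 0), [:: (m1, 6%N); (m1, 7%N); (p1, 4%N); (p1, 5%N); (m1, 2%N); (m1, 3%N); (p1, 0%N); (p1, 1%N)]);
  ((o4 1, o4 2, o4 1), [:: (m1, 7%N); (m1, 6%N); (p1, 5%N); (p1, 4%N); (m1, 3%N); (m1, 2%N); (p1, 1%N); (p1, 0%N)]);
  ((o4 1, o4 2, o4 2), [:: (p1, 7%N); (m1, 6%N); (m1, 5%N); (p1, 4%N); (p1, 3%N); (m1, 2%N); (m1, 1%N); (p1, 0%N)]);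
  ((o4 1, o4 2, o4 3), [:: (m1, 6%N); (p1, 7%N); (p1, 4%N); (m1, 5%N); (m1, 2%N); (p1, 3%N); (p1, 0%N); (m1, 1%N)]);
  ((o4 1, o4 3, o4 0), [:: (p1, 4%N); (p1, 5%N); (m1, 6%N); (m1, 7%N); (p1, 0%N); (p1, 1%N); (m1, 2%N); (m1, 3%N)]);
  ((o4 1, o4 3, o4 1), [:: (p1, 5%N); (p1, 4%N); (m1, 7%N); (m1, 6%N); (p1, 1%N); (p1, 0%N); (m1, 3%N); (m1, 2%N)]);
  ((o4 1, o4 3, o4 2), [:: (m1, 5%N); (p1, 4%N); (p1, 7%N); (m1, 6%N); (m1, 1%N); (p1, 0%N); (p1, 3%N); (m1, 2%N)]);
  ((o4 1, o4 3, o4 3), [:: (p1, 4%N); (m1, 5%N); (m1, 6%N); (p1, 7%N); (p1, 0%N); (m1, 1%N); (m1, 2%N); (p1, 3%N)]);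
  ((o4 2, o4 0, o4 0), [:: (m1, 4%N); (m1, 5%N); (m1, 6%N); (m1, 7%N); (p1, 0%N); (p1, 1%N); (p1, 2%N); (p1, 3%N)]);
  ((o4 2, o4 0, o4 1), [:: (m1, 5%N); (m1, 4%N); (m1, 7%N); (m1, 6%N); (p1, 1%N); (p1, 0%N); (p1, 3%N); (p1, 2%N)]);
  ((o4 2, o4 0, o4 2), [:: (p1, 5%N); (m1, 4%N); (p1, 7%N); (m1, 6%N); (m1, 1%N); (p1, 0%N); (m1, 3%N); (p1, 2%N)]);
  ((o4 2, o4 0, o4 3), [:: (m1, 4%N); (p1, 5%N); (m1, 6%N); (p1, 7%N); (p1, 0%N); (m1, 1%N); (p1, 2%N); (m1, 3%N)]);
  ((o4 2, o4 1, o4 0), [:: (m1, 6%N); (m1, 7%N); (m1, 4%N); (m1, 5%N); (p1, 2%N); (p1, 3%N); (p1, 0%N); (p1, 1%N)]);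
  ((o4 2, o4 1, o4 1), [:: (m1, 7%N); (m1, 6%N); (m1, 5%N); (m1, 4%N); (p1, 3%N); (p1, 2%N); (p1, 1%N); (p1, 0%N)]);
  ((o4 2, o4 1, o4 2), [:: (p1, 7%N); (m1, 6%N); (p1, 5%N); (m1, 4%N); (m1, 3%N); (p1, 2%N); (m1, 1%N); (p1, 0%N)]);
  ((o4 2, o4 1, o4 3), [:: (m1, 6%N); (p1, 7%N); (m1, 4%N); (p1, 5%N); (p1, 2%N); (m1, 3%N); (p1, 0%N); (m1, 1%N)]);
  ((o4 2, o4 2, o4 0), [:: (p1, 6%N); (p1, 7%N); (m1, 4%N); (m1, 5%N); (m1, 2%N); (m1, 3%N); (p1, 0%N); (p1, 1%N)]);
  ((o4 2, o4 2, o4 1), [:: (p1, 7%N); (p1, 6%N); (m1, 5%N); (m1, 4%N); (m1, 3%N); (m1, 2%N); (p1, 1%N); (p1, 0%N)]);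
  ((o4 2, o4 2, o4 2), [:: (m1, 7%N); (p1, 6%N); (p1, 5%N); (m1, 4%N); (p1, 3%N); (m1, 2%N); (m1, 1%N); (p1, 0%N)]);
  ((o4 2, o4 2, o4 3), [:: (p1, 6%N); (m1, 7%N); (m1, 4%N); (p1, 5%N); (m1, 2%N); (p1, 3%N); (p1, 0%N); (m1, 1%N)]);
  ((o4 2, o4 3, o4 0), [:: (m1, 4%N); (m1, 5%N); (p1, 6%N); (p1, 7%N); (p1, 0%N); (p1, 1%N); (m1, 2%N); (m1, 3%N)]);
  ((o4 2, o4 3, o4 1), [:: (m1, 5%N); (m1, 4%N); (p1, 7%N); (p1, 6%N); (p1, 1%N); (p1, 0%N); (m1, 3%N); (m1, 2%N)]);
  ((o4 2, o4 3, o4 2), [:: (p1, 5%N); (m1, 4%N); (m1, 7%N); (p1, 6%N); (m1, 1%N); (p1, 0%N); (p1, 3%N); (m1, 2%N)]);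
  ((o4 2, o4 3, o4 3), [:: (m1, 4%N); (p1, 5%N); (p1, 6%N); (m1, 7%N); (p1, 0%N); (m1, 1%N); (m1, 2%N); (p1, 3%N)]);
  ((o4 3, o4 0, o4 0), [:: (p1, 0%N); (p1, 1%N); (p1, 2%N); (p1, 3%N); (m1, 4%N); (m1, 5%N); (m1, 6%N); (m1, 7%N)]);
  ((o4 3, o4 0, o4 1), [:: (p1, 1%N); (p1, 0%N); (p1, 3%N); (p1, 2%N); (m1, 5%N); (m1, 4%N); (m1, 7%N); (m1, 6%N)]);
  ((o4 3, o4 0, o4 2), [:: (m1, 1%N); (p1, 0%N); (m1, 3%N); (p1, 2%N); (p1, 5%N); (m1, 4%N); (p1, 7%N); (m1, 6%N)]);
  ((o4 3, o4 0, o4 3), [:: (p1, 0%N); (m1, 1%N); (p1, 2%N); (m1, 3%N); (m1, 4%N); (p1, 5%N); (m1, 6%N); (p1, 7%N)]);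
  ((o4 3, o4 1, o4 0), [:: (p1, 2%N); (p1, 3%N); (p1, 0%N); (p1, 1%N); (m1, 6%N); (m1, 7%N); (m1, 4%N); (m1, 5%N)]);
  ((o4 3, o4 1, o4 1), [:: (p1, 3%N); (p1, 2%N); (p1, 1%N); (p1, 0%N); (m1, 7%N); (m1, 6%N); (m1, 5%N); (m1, 4%N)]);
  ((o4 3, o4 1, o4 2), [:: (m1, 3%N); (p1, 2%N); (m1, 1%N); (p1, 0%N); (p1, 7%N); (m1, 6%N); (p1, 5%N); (m1, 4%N)]);
  ((o4 3, o4 1, o4 3), [:: (p1, 2%N); (m1, 3%N); (p1, 0%N); (m1, 1%N); (m1, 6%N); (p1, 7%N); (m1, 4%N); (p1, 5%N)]);
  ((o4 3, o4 2, o4 0), [:: (m1, 2%N); (m1, 3%N); (p1, 0%N); (p1, 1%N); (p1, 6%N); (p1, 7%N); (m1, 4%N); (m1, 5%N)]);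
  ((o4 3, o4 2, o4 1), [:: (m1, 3%N); (m1, 2%N); (p1, 1%N); (p1, 0%N); (p1, 7%N); (p1, 6%N); (m1, 5%N); (m1, 4%N)]);
  ((o4 3, o4 2, o4 2), [:: (p1, 3%N); (m1, 2%N); (m1, 1%N); (p1, 0%N); (m1, 7%N); (p1, 6%N); (p1, 5%N); (m1, 4%N)]);
  ((o4 3, o4 2, o4 3), [:: (m1, 2%N); (p1, 3%N); (p1, 0%N); (m1, 1%N); (p1, 6%N); (m1, 7%N); (m1, 4%N); (p1, 5%N)]);
  ((o4 3, o4 3, o4 0), [:: (p1, 0%N); (p1, 1%N); (m1, 2%N); (m1, 3%N); (m1, 4%N); (m1, 5%N); (p1, 6%N); (p1, 7%N)]);
  ((o4 3, o4 3, o4 1), [:: (p1, 1%N); (p1, 0%N); (m1, 3%N); (m1, 2%N); (m1, 5%N); (m1, 4%N); (p1, 7%N); (p1, 6%N)]);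
  ((o4 3, o4 3, o4 2), [:: (m1, 1%N); (p1, 0%N); (p1, 3%N); (m1, 2%N); (p1, 5%N); (m1, 4%N); (m1, 7%N); (p1, 6%N)]);
  ((o4 3, o4 3, o4 3), [:: (p1, 0%N); (m1, 1%N); (m1, 2%N); (p1, 3%N); (m1, 4%N); (p1, 5%N); (p1, 6%N); (m1, 7%N)]) ].
Definition orbl a b := has (fun p => svl (appf p.2 a) b) tabL.
Definition stabl r := [seq p.1 | p <- tabL & svl (appf p.2 r) r].
Definition Ctab := all (fun k => all (fun i => (prm k i < 8)%N && all (fun j =>
   lmcn k i j == if j == prm k i then sgn k i else z0) I8) I8) enumL.
Definition C0 := all (fun i => all (fun j => lmcn k0 i j == if i == j then p1 else z0) I8) I8.
Definition C3 := all (fun k => all (fun k' =>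
   all (fun i => (prm (kx k k') i == prm k' (prm k i)) && (sgn k i * sgn k' (prm k i) == sgn (kx k k') i)) I8 ||
   all (fun i => (prm (kx k k') i == prm k' (prm k i)) && (sgn k i * sgn k' (prm k i) == - sgn (kx k k') i)) I8) enumL) enumL.
Definition C4 := all (fun k => all (fun i => all (fun j =>
   sumL [seq lmcn k l i * lmcn k l j | l <- I8] == if i == j then p1 else z0) I8) I8) enumL.
Definition Croots := roots == rootsL.
Definition Ctabl := tabL == [seq (k, rowtab k) | k <- enumL].
Definition Csz := all (fun r => size r == 8%N) rootsL.
Definition C2 := all (fun p => all (fun r => appf p.2 r \in rootsL) rootsL) tabL.
Definition C5 := all (fun u => has (fun r => orbl r u) reps) rootsL.
Definition Qb (d : int) r v (sr sv : seq Lidx) (p : Lidx * seq (int * nat)) :=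
  (if d != 0 then dotl r (appf p.2 v) != 0 else dotl r (appf p.2 v) == 0)
  == has (fun k => kx p.1 k \in sv) sr.
Definition Qw (r v : seq int) (sr : seq (Lidx * seq (int * nat))) (w : seq int) :=
  (if dotl r v != 0 then dotl r w != 0 else dotl r w == 0) == has (fun q => svl (appf q.2 v) w) sr.
Definition Qc (r v : seq int) (sr : seq (Lidx * seq (int * nat))) (p : Lidx * seq (int * nat)) :=
  Qw r v sr (appf p.2 v).
Definition C6r (r : seq int) (sr : seq (Lidx * seq (int * nat))) :=
  all (fun v => (svl r v || ~~ orbl r v) ==> all (fun p => Qc r v sr p) tabL) rootsL.
Definition C6 := all (fun r => C6r r [seq p <- tabL | svl (appf p.2 r) r]) reps.
Definition Creps := all (fun r => r \in rootsL) reps.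
Lemma Ctab_ok : Ctab. Proof. by vm_compute. Qed.
Lemma C0_ok : C0. Proof. by vm_compute. Qed.
Lemma C3_ok : C3. Proof. by vm_compute. Qed.
Lemma C4_ok : C4. Proof. by vm_compute. Qed.
Lemma Croots_ok : Croots. Proof. by vm_compute. Qed.
Lemma Ctabl_ok : Ctabl. Proof. by vm_compute. Qed.
Lemma Csz_ok : Csz. Proof. by vm_compute. Qed.
Lemma C2_ok : C2. Proof. by vm_compute. Qed.
Lemma C5_ok : C5. Proof. by vm_compute. Qed.
Lemma C6_ok : C6. Proof. by vm_compute. Qed.
Lemma Creps_ok : Creps. Proof. by vm_compute. Qed.

Lemma mem_ords4 (a : 'I_4) : a \in ords4.
Proof. by case: a => [[|[|[|[|n]]]] H]. Qed.

Lemma mem_enumL k : k \in enumL.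
Proof.
case: k => [[a b] c].
apply: (@allpairs_f _ _ _ (fun ab c => (ab, c))); last exact: mem_ords4.
by apply: (@allpairs_f _ _ _ (fun a b => (a, b))); apply: mem_ords4.
Qed.

Lemma x4C a b : x4 a b = x4 b a.
Proof. by case: a => [[|[|[|[|n]]]] Ha] //; case: b => [[|[|[|[|m]]]] Hb] //; apply: val_inj. Qed.
Lemma x4A a b c : x4 a (x4 b c) = x4 (x4 a b) c.
Proof.
by case: a => [[|[|[|[|n]]]] Ha] //; case: b => [[|[|[|[|m]]]] Hb] //;
  case: c => [[|[|[|[|l]]]] Hc] //; apply: val_inj.
Qed.
Lemma x4K a : x4 a a = o4 0.
Proof. by case: a => [[|[|[|[|n]]]] Ha] //; apply: val_inj. Qed.
Lemma x40 a : x4 (o4 0) a = a.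
Proof. by case: a => [[|[|[|[|n]]]] Ha] //; apply: val_inj. Qed.

Lemma kxC k k' : kx k k' = kx k' k.
Proof. by case: k => [[a b] c]; case: k' => [[a' b'] c']; rewrite /kx /= x4C (x4C b) (x4C c). Qed.
Lemma kxA k1 k2 k3 : kx k1 (kx k2 k3) = kx (kx k1 k2) k3.
Proof. by case: k1 => [[a b] c]; case: k2 => [[a' b'] c']; case: k3 => [[a'' b''] c'']; rewrite /kx /= !x4A. Qed.
Lemma kxK k : kx k k = k0.
Proof. by case: k => [[a b] c]; rewrite /kx /= !x4K. Qed.
Lemma kx0 k : kx k0 k = k.
Proof. by case: k => [[a b] c]; rewrite /kx /= !x40. Qed.
Lemma kxKl a k : kx a (kx a k) = k.
Proof. by rewrite kxA kxK kx0. Qed.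

Lemma pauliE p (a b : 'I_2) : pauli p a b = pc p a b.
Proof.
case: p => [[|[|[|[|n]]]] Hp] //=; rewrite /matI /matX /matY /matZ ?mxE;
  case: a => [[|[|a]] Ha] //; case: b => [[|[|b]] Hb] //;
  rewrite ?big_ord_recl ?big_ord0 /= ?mxE //=.
Qed.

Lemma LmatE k (i j : 'I_8) : Lmat k i j = lmcn k i j.
Proof.
have Hi := ltn_ord i; have Hj := ltn_ord j.
rewrite /Lmat /kron3 mxE !pauliE /bit1 /bit2 /bit3 /lmcn !inordK //; lia.
Qed.

Lemma sumL_big (F : nat -> int) s : sumL [seq F i | i <- s] = \sum_(i <- s) F i.
Proof. by elim: s => [|a s IH]; rewrite ?big_nil ?big_cons //= IH. Qed.
Lemma prodL_big (F : nat -> int) s : prodL [seq F i | i <- s] = \prod_(i <- s) F i.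
Proof. by elim: s => [|a s IH]; rewrite ?big_nil ?big_cons //= IH. Qed.

Lemma big8 (F : nat -> int) : \sum_(i < 8) F i = sumL [seq F i | i <- I8].
Proof. by rewrite sumL_big -(big_mkord xpredT F) /index_iota subn0. Qed.
Lemma big8P (F : nat -> int) : \prod_(i < 8) F i = prodL [seq F i | i <- I8].
Proof. by rewrite prodL_big -(big_mkord xpredT F) /index_iota subn0. Qed.

Definition vecl (r : seq int) : vec := \col_(i < 8) nth 0 r i.
Definition cv (x : vec) : seq int := [seq x (inord n) 0 | n <- I8].

Lemma size_cv x : size (cv x) = 8%N.
Proof. by rewrite size_map size_iota. Qed.

Lemma cvK x : vecl (cv x) = x.
Proof.
apply/matrixP => i j; rewrite ord1 mxE /cv (nth_map 0%N) ?size_iota //.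
by rewrite nth_iota // add0n inord_val.
Qed.

Lemma vecl_cv r : size r = 8%N -> cv (vecl r) = r.
Proof.
move=> Hr; apply: (@eq_from_nth _ 0); rewrite size_cv ?Hr // => i Hi.
by rewrite /cv (nth_map 0%N) ?size_iota // nth_iota // add0n mxE inordK.
Qed.

Lemma Ctab_row k {i : nat} : (i < 8)%N ->
  (prm k i < 8)%N /\ forall j, (j < 8)%N -> lmcn k i j = if j == prm k i then sgn k i else z0.
Proof.
move=> Hi; have /allP/(_ k (mem_enumL k))/allP/(_ i) := Ctab_ok.
rewrite mem_iota add0n Hi => /(_ isT) /andP [Hp /allP H]; split => // j Hj.
by apply/eqP; apply: H; rewrite mem_iota add0n.
Qed.

Lemma size_appl k r : size (appl k r) = 8%N.
Proof. by rewrite /appl /appf /rowtab !size_map size_iota. Qed.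

Lemma nth_appl k r i : (i < 8)%N -> nth 0 (appl k r) i = sgn k i * nth 0 r (prm k i).
Proof.
move=> Hi; rewrite /appl /appf /rowtab -map_comp (nth_map 0%N) ?size_iota //.
by rewrite nth_iota.
Qed.

Lemma Lvecl k r : Lmat k *m vecl r = vecl (appl k r).
Proof.
apply/matrixP => i j; rewrite ord1 !mxE nth_appl //.
have [Hp Hrow] := Ctab_row k (ltn_ord i : (nat_of_ord i < 8)%N).
rewrite (bigD1 (Ordinal Hp)) //= big1 => [|l Hl].
  by rewrite addr0 LmatE Hrow // eqxx mxE.
rewrite LmatE Hrow // ifF ?mul0r //.
by apply: contraNF Hl => /eqP Hl; apply/eqP/val_inj.
Qed.

Lemma Lvec k x : Lmat k *m x = vecl (appl k (cv x)).
Proof. by rewrite -{1}(cvK x) Lvecl. Qed.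

Notation sv := same_vertex.
Implicit Types x y : vec.

Lemma sv_refl x : sv x x.
Proof. by rewrite /sv eqxx. Qed.
Lemma sv_N x : sv x (- x).
Proof. by rewrite /sv eqxx orbT. Qed.
Lemma svS {x y} : sv x y -> sv y x.
Proof. by case/orP => /eqP->; rewrite ?sv_refl // /sv opprK eqxx orbT. Qed.
Lemma sv_trans {x y} {z : vec} : sv x y -> sv y z -> sv x z.
Proof.
case/orP => /eqP-> /orP [] /eqP->; rewrite ?sv_refl ?sv_N //.
by rewrite opprK sv_refl.
Qed.
Lemma sv_cong {x x' y y' : vec} : sv x x' -> sv y y' -> sv x y = sv x' y'.
Proof.
move=> Hx Hy; apply/idP/idP => H.
  exact: sv_trans (sv_trans (svS Hx) H) Hy.
exact: sv_trans (sv_trans Hx H) (svS Hy).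
Qed.
Lemma sv_mul (A : 'M[int]_8) {x y} : sv x y -> sv (A *m x) (A *m y).
Proof. by case/orP => /eqP->; rewrite ?sv_refl // mulmxN sv_N. Qed.

Lemma dotNl x y : dot (- x) y = - dot x y.
Proof. by rewrite /dot -sumrN; apply: eq_bigr => i _; rewrite mxE mulNr. Qed.
Lemma dotNr x y : dot x (- y) = - dot x y.
Proof. by rewrite /dot -sumrN; apply: eq_bigr => i _; rewrite mxE mulrN. Qed.
Lemma dot_sv {x x' y y' : vec} : sv x x' -> sv y y' -> (dot x y == 0) = (dot x' y' == 0).
Proof.
by case/orP => /eqP-> /orP [] /eqP->; rewrite ?dotNl ?dotNr ?oppr_eq0.
Qed.

Lemma dotE x y : dot x y = (x^T *m y) 0 0.
Proof. by rewrite mxE; apply: eq_bigr => i _; rewrite mxE. Qed.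

Lemma vecl_inj a b : size a = 8%N -> size b = 8%N -> vecl a = vecl b -> a = b.
Proof.
move=> Ha Hb H; apply: (@eq_from_nth _ 0); rewrite Ha ?Hb // => i Hi.
by have := congr1 (fun M : vec => M (inord i) 0) H; rewrite !mxE inordK.
Qed.
Lemma vecl_opp a : size a = 8%N -> - vecl a = vecl [seq - z | z <- a].
Proof.
move=> Ha; apply/matrixP => i j; rewrite !mxE (nth_map 0) // Ha ltn_ord //.
Qed.
Lemma sv_vecl a b : size a = 8%N -> size b = 8%N -> sv (vecl a) (vecl b) = svl a b.
Proof.
move=> Ha Hb; rewrite /sv /svl vecl_opp //; congr orb; apply/eqP/eqP => [|->] //.
  by apply: vecl_inj.
by apply: vecl_inj; rewrite ?size_map.
Qed.
Lemma dot_vecl a b : dot (vecl a) (vecl b) = dotl a b.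
Proof.
rewrite /dot /dotl -(big8 (fun i => nth 0 a i * nth 0 b i)).
by apply: eq_bigr => i _; rewrite !mxE.
Qed.

Lemma ex8 (P : pred 'I_8) (Q : pred nat) : (forall i : 'I_8, P i = Q i) ->
  [exists i, P i] = has Q I8.
Proof.
move=> H; apply/existsP/hasP => [[i Pi]|[n]].
  by exists (val i); rewrite ?mem_iota ?add0n ?ltn_ord // -H.
rewrite mem_iota add0n => Hn Qn; by exists (Ordinal Hn); rewrite H.
Qed.
Lemma fa8 (P : pred 'I_8) (Q : pred nat) : (forall i : 'I_8, P i = Q i) ->
  [forall i, P i] = all Q I8.
Proof.
move=> H; apply/forallP/allP => [Pi n|Qi i].
  by rewrite mem_iota add0n => Hn; have := Pi (Ordinal Hn); rewrite H.
by rewrite H; apply: Qi; rewrite mem_iota add0n ltn_ord.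
Qed.

Lemma isr_vecl r : is_root (vecl r) = isrl r.
Proof.
rewrite /is_root /isrl; congr (_ || (_ && _)).
- apply: ex8 => i; apply: ex8 => j; congr andb; apply: fa8 => k.
  by rewrite !mxE.
- by apply: fa8 => k; rewrite mxE.
- congr (_ == _); rewrite -(big8P (fun k => nth 0 r k)).
  by apply: eq_bigr => k _; rewrite mxE.
Qed.

Lemma isrl_entries r : isrl r -> forall k, (k < 8)%N -> nth 0 r k \in [:: m1; z0; p1].
Proof.
have pm (z : int) : pm1 z -> z \in [:: m1; z0; p1].
  by case/orP => /eqP->.
move=> H k Hk; have kI : k \in I8 by rewrite mem_iota add0n.
case/orP: H => [/hasP [i _ /hasP [j _ /andP [_ /allP H]]] | /andP [/allP H _]].
  have := H k kI; case: ifP => _; first exact: pm.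
  case: ifP => _; first exact: pm.
  by move/eqP->.
exact: pm (H k kI).
Qed.

Lemma allseqsP n s : size s = n ->
  (forall k, (k < n)%N -> nth 0 s k \in [:: m1; z0; p1]) -> s \in allseqs n.
Proof.
elim: n s => [|n IH] [|a s] // Hs H.
have {}Hs : size s = n by case: Hs.
change (a :: s \in [seq a :: s | a <- [:: m1; z0; p1], s <- allseqs n]).
apply: (@allpairs_f _ _ _ (fun a s => a :: s)); first exact: (H 0%N).
by apply: IH => // k Hk; apply: (H k.+1).
Qed.

Lemma root_cv {x} : is_root x -> cv x \in rootsL.
Proof.
move=> Hx; have Hr : isrl (cv x) by rewrite -isr_vecl cvK.
have := Croots_ok; rewrite /Croots => /eqP <-.
rewrite mem_filter Hr andTb; apply: allseqsP; first exact: size_cv.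
exact: isrl_entries.
Qed.

Lemma rootsL_root {r} : r \in rootsL -> is_root (vecl r).
Proof.
have := Croots_ok; rewrite /Croots => /eqP <-.
by rewrite mem_filter isr_vecl => /andP [].
Qed.

Lemma rootsL_size {r} : r \in rootsL -> size r = 8%N.
Proof. by move=> Hr; have /allP/(_ r Hr)/eqP := Csz_ok. Qed.

Lemma tabL_mem k : (k, rowtab k) \in tabL.
Proof.
have := Ctabl_ok; rewrite /Ctabl => /eqP->.
by apply: (map_f (fun k => (k, rowtab k))); apply: mem_enumL.
Qed.
Lemma tabL_inv {p} : p \in tabL -> p = (p.1, rowtab p.1).
Proof.
have := Ctabl_ok; rewrite /Ctabl => /eqP->.
by case/mapP => k _ ->.
Qed.

Lemma memI8 (i : 'I_8) : nat_of_ord i \in I8.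
Proof. by rewrite mem_iota add0n ltn_ord. Qed.

Lemma L0 x : Lmat k0 *m x = x.
Proof.
suff -> : Lmat k0 = (1%:M : 'M[int]_8) by rewrite mul1mx.
apply/matrixP => i j; rewrite LmatE !mxE.
have /allP H1 := C0_ok.
have /allP H2 := H1 i (memI8 i).
by move/eqP: (H2 j (memI8 j)) => ->; rewrite -val_eqE /=; case: eqP.
Qed.

Lemma appl_comp k k' r : size r = 8%N ->
  appl k (appl k' r) = appl (kx k k') r \/
  appl k (appl k' r) = [seq - z | z <- appl (kx k k') r].
Proof.
move=> Hr.
have /allP H0 := C3_ok.
have /allP H1 := H0 k (mem_enumL k).
have := H1 k' (mem_enumL k').
move=> /orP [] /allP H; [left|right];
  apply: (@eq_from_nth _ 0); rewrite ?size_map ?size_appl // => i Hi;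
  have iI : i \in I8 by rewrite mem_iota add0n.
  have [Hp _] := Ctab_row k Hi.
  case/andP: (H i iI) => /eqP Hperm /eqP Hsg.
  by rewrite (nth_appl k) // (nth_appl _ _ _ Hp) nth_appl // mulrA Hsg Hperm.
have [Hp _] := Ctab_row k Hi.
case/andP: (H i iI) => /eqP Hperm /eqP Hsg.
rewrite (nth_appl k) // (nth_appl _ _ _ Hp) (nth_map 0) ?size_appl // nth_appl // mulrA Hsg Hperm.
by rewrite mulNr.
Qed.

Lemma Lcomp k k' x : sv (Lmat k *m (Lmat k' *m x)) (Lmat (kx k k') *m x).
Proof.
rewrite (Lvec k') Lvec vecl_cv ?size_appl // (Lvec (kx k k')).
case: (appl_comp k k' _ (size_cv x)) => ->; first exact: sv_refl.
rewrite -vecl_opp ?size_appl //; apply: svS; exact: sv_N.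
Qed.

Lemma LK k x : sv (Lmat k *m (Lmat k *m x)) x.
Proof. by have := Lcomp k k x; rewrite kxK L0. Qed.

Lemma LtL k : (Lmat k)^T *m Lmat k = 1%:M.
Proof.
apply/matrixP => i j; rewrite !mxE.
rewrite (eq_bigr (fun l : 'I_8 => lmcn k l i * lmcn k l j)) => [|l _]; last first.
  by rewrite mxE !LmatE.
rewrite (big8 (fun l => lmcn k l i * lmcn k l j)).
have /allP H0 := C4_ok.
have /allP H1 := H0 k (mem_enumL k).
have /allP H2 := H1 i (memI8 i).
by move/eqP: (H2 j (memI8 j)) => ->; rewrite -val_eqE /=; case: eqP.
Qed.

Lemma Ldot k x y : dot (Lmat k *m x) (Lmat k *m y) = dot x y.
Proof.
by rewrite !dotE trmx_mul -!mulmxA (mulmxA (Lmat k)^T) LtL mul1mx.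
Qed.

Lemma sv_Lmul k x y : sv (Lmat k *m x) (Lmat k *m y) = sv x y.
Proof.
apply/idP/idP => [H|]; last exact: sv_mul.
have := sv_mul (Lmat k) H.
by rewrite (sv_cong (LK k x) (LK k y)).
Qed.

Lemma Lcommute k e x : sv (Lmat k *m (Lmat e *m x)) (Lmat e *m (Lmat k *m x)).
Proof.
apply: sv_trans (Lcomp k e x) _; rewrite kxC; apply: svS; exact: Lcomp.
Qed.

Lemma orb_sym {a b : vec} : inLorbit a b -> inLorbit b a.
Proof.
case/existsP => k H; apply/existsP; exists k; rewrite /Lmaps.
have := sv_mul (Lmat k) H; rewrite (sv_cong (LK k a) (sv_refl _)).
by move/svS.
Qed.
Lemma orb_trans {a b d : vec} : inLorbit a b -> inLorbit b d -> inLorbit a d.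
Proof.
case/existsP => k H1 /existsP [k' H2]; apply/existsP; exists (kx k' k).
rewrite /Lmaps; have := sv_mul (Lmat k') H1.
rewrite (sv_cong (Lcomp k' k a) (sv_refl _)) => H.
exact: sv_trans H H2.
Qed.
Lemma orb_selfM k x : inLorbit x (Lmat k *m x).
Proof. by apply/existsP; exists k; apply: sv_refl. Qed.
Lemma orb_M k (a : vec) x : inLorbit a (Lmat k *m x) = inLorbit a x.
Proof.
apply/idP/idP => H.
  exact: orb_trans H (orb_sym (orb_selfM k x)).
exact: orb_trans H (orb_selfM k x).
Qed.
Lemma orb_sv (a : vec) x y : sv x y -> inLorbit a x -> inLorbit a y.
Proof.
move=> Hxy H; apply: orb_trans H _; apply/existsP; exists k0.
by rewrite /Lmaps L0.
Qed.
Lemma orb_vecl a b : size a = 8%N -> size b = 8%N -> inLorbit (vecl a) (vecl b) = orbl a b.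
Proof.
move=> Ha Hb; apply/existsP/hasP => [[k H]|[p Hp H]].
  exists (k, rowtab k); first exact: tabL_mem.
  by move: H; rewrite /Lmaps Lvecl sv_vecl ?size_appl.
exists p.1; rewrite /Lmaps Lvecl sv_vecl ?size_appl //.
by move: H; rewrite (tabL_inv Hp).
Qed.

Lemma Lroot k x : is_root x -> is_root (Lmat k *m x).
Proof.
move=> Hx; rewrite Lvec; apply: rootsL_root.
have Hc := root_cv Hx; have /allP H := C2_ok.
have /allP := H _ (tabL_mem k); move/(_ _ Hc); exact.
Qed.

Lemma adjGw_M w k x y : adjGw w (Lmat k *m x) (Lmat k *m y) = adjGw w x y.
Proof.
rewrite /adjGw /adjE8 Ldot; apply: eq_existsb => i; apply: eq_existsb => j.
by rewrite !orb_M.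
Qed.

Lemma key0 {u v} c : is_root u -> is_root v -> (sv u v || ~~ inLorbit u v) ->
  (if dot u v != 0 then dot u (Lmat c *m v) != 0 else dot u (Lmat c *m v) == 0) =
  [exists k, sv (Lmat k *m u) u && sv (Lmat k *m v) (Lmat c *m v)].
Proof.
move=> Hu Hv Hg.
have [r rin [e He]] : exists2 r, r \in reps & exists e, sv (Lmat e *m vecl r) u.
  have /allP H5 := C5_ok; have /hasP [r rin Hr] := H5 _ (root_cv Hu).
  have /allP Hreps := Creps_ok; have Hrs := rootsL_size (Hreps r rin).
  exists r => //; move/hasP: Hr => [p pin Hp]; exists p.1.
  rewrite Lvecl -(cvK u) sv_vecl ?size_appl ?size_cv //.
  by move: Hp; rewrite (tabL_inv pin).
have /allP Hreps := Creps_ok; have Hrs := rootsL_size (Hreps r rin).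
set R := vecl r; set V := Lmat e *m v.
have HV : is_root V by apply: Lroot.
set s := cv V; have Hs : s \in rootsL := root_cv HV.
have Hss := rootsL_size Hs.
have HVs : V = vecl s by rewrite cvK.
have D1 : (dot u v == 0) = (dot R V == 0).
  by rewrite (dot_sv (svS He) (sv_refl v)) -(Ldot e) (dot_sv (LK e R) (sv_refl _)).
have D2 : (dot u (Lmat c *m v) == 0) = (dot R (Lmat c *m V) == 0).
  by rewrite (dot_sv (svS He) (sv_refl _)) -(Ldot e) (dot_sv (LK e R) (Lcommute e c v)).
have E1 k : sv (Lmat k *m u) u = sv (Lmat k *m R) R.
  rewrite -(sv_cong (sv_mul (Lmat k) He) He).
  by rewrite (sv_cong (Lcommute k e R) (sv_refl _)) sv_Lmul.
have E2 k : sv (Lmat k *m v) (Lmat c *m v) = sv (Lmat k *m V) (Lmat c *m V).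
  by rewrite -(sv_Lmul e) (sv_cong (Lcommute e k v) (Lcommute e c v)).
have G : svl r s || ~~ orbl r s.
  rewrite -sv_vecl // -orb_vecl // -HVs.
  case/orP: Hg => [Huv|Hno]; apply/orP; [left|right].
    have H1 : sv R (Lmat e *m u).
      have := sv_mul (Lmat e) He; rewrite (sv_cong (LK e R) (sv_refl _)); exact.
    exact: sv_trans H1 (sv_mul (Lmat e) Huv).
  apply/negP => H; move/negP: Hno; apply.
  rewrite /V orb_M in H.
  have HRu : inLorbit R u by apply/existsP; exists e.
  exact: orb_trans (orb_sym HRu) H.
have -> : (dot u v != 0) = (dot R V != 0) by rewrite D1.
have -> : (dot u (Lmat c *m v) != 0) = (dot R (Lmat c *m V) != 0) by rewrite D2.
have -> : (dot u (Lmat c *m v) == 0) = (dot R (Lmat c *m V) == 0) by rewrite D2.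
have -> : [exists k, sv (Lmat k *m u) u && sv (Lmat k *m v) (Lmat c *m v)] =
          [exists k, sv (Lmat k *m R) R && sv (Lmat k *m V) (Lmat c *m V)].
  by apply: eq_existsb => k; rewrite E1 E2.
have -> : [exists k, sv (Lmat k *m R) R && sv (Lmat k *m V) (Lmat c *m V)] =
          [exists k, svl (appl k r) r && svl (appl k s) (appl c s)].
  by apply: eq_existsb => k; rewrite /R HVs !Lvecl !sv_vecl ?size_appl.
rewrite /R HVs Lvecl !dot_vecl.
have /allP H6 := C6_ok; have := H6 r rin; rewrite /C6r => /allP H7.
have := H7 s Hs; rewrite G implyTb => /allP H8.
have := H8 _ (tabL_mem c); rewrite /Qc /Qw => /eqP ->.
apply/hasP/existsP => [[q qin Hq]|[k /andP [H1 H2]]].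
  move: qin; rewrite mem_filter => /andP [Hq1 qin'].
  move: Hq1 Hq; rewrite (tabL_inv qin') => Hq1 Hq.
  by exists q.1; rewrite /appl Hq1.
exists (k, rowtab k); last exact: H2.
by rewrite mem_filter tabL_mem andbT.
Qed.

Theorem lemma3p10 (w : 'I_15 -> vec) :
  Ltransversal w ->
  (forall k : Lidx,
     (forall x, is_root x -> is_root (Lmat k *m x))
     /\ (forall y, is_root y -> exists2 x, is_root x & Lmaps k x y)
     /\ (forall x y, is_root x -> is_root y ->
           adjGw w (Lmat k *m x) (Lmat k *m y) = adjGw w x y))
  /\
  (forall (i j : 'I_15) (x y : vec), is_root x -> is_root y ->
     inLorbit (w i) x -> inLorbit (w j) y ->
     (~~ adjGw w x y <-> exists k : Lidx, Lmaps k (w i) x && Lmaps k (w j) y)).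
Proof.
case=> Hw Hcov Huniq; split.
  move=> k; split; first exact: Lroot.
  split.
    move=> y Hy; exists (Lmat k *m y); first exact: Lroot.
    exact: LK.
  by move=> x y _ _; apply: adjGw_M.
move=> i j x y Hx Hy Hix Hjy.
set u := w i; set v := w j.
have Hadj : adjGw w x y = (if dot u v != 0 then adjE8 x y else ~~ adjE8 x y).
  apply/existsP/idP => [[i' /existsP [j' /and3P [Hi' Hj' Hc]]] | H].
    have Ei : i' = i by apply: Huniq; exact: orb_trans Hi' (orb_sym Hix).
    have Ej : j' = j by apply: Huniq; exact: orb_trans Hj' (orb_sym Hjy).
    by move: Hc; rewrite Ei Ej.
  by exists i; apply/existsP; exists j; rewrite Hix Hjy H.
case/existsP: Hix => a Ha; case/existsP: Hjy => b Hb.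
rewrite /Lmaps -/u -/v in Ha Hb.
have Hg : sv u v || ~~ inLorbit u v.
  case: (eqVneq i j) => [Eij|Hij].
    by rewrite /u /v Eij sv_refl.
  apply/orP; right; apply/negP => H; move/eqP: Hij; apply; exact: Huniq H.
have key := key0 (kx a b) (Hw i) (Hw j) Hg.
have Dxy : (dot x y == 0) = (dot u (Lmat (kx a b) *m v) == 0).
  by rewrite -(dot_sv Ha Hb) -(Ldot a) (dot_sv (LK a u) (Lcomp a b v)).
have -> : ~~ adjGw w x y =
   (if dot u v != 0 then dot u (Lmat (kx a b) *m v) != 0
    else dot u (Lmat (kx a b) *m v) == 0).
  by rewrite Hadj /adjE8 Dxy; case: (dot u v != 0); rewrite ?negbK.
rewrite key; split.
  case/existsP => k /andP [H1 H2]; exists (kx a k); apply/andP; split; rewrite /Lmaps.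
    have := sv_mul (Lmat a) H1; rewrite (sv_cong (Lcomp a k u) (sv_refl _)) => H.
    exact: sv_trans H Ha.
  have := sv_mul (Lmat a) H2.
  rewrite (sv_cong (Lcomp a k v) (Lcomp a (kx a b) v)) kxKl => H.
  exact: sv_trans H Hb.
case => k /andP [H1 H2]; apply/existsP; exists (kx a k); apply/andP; split.
  have := sv_mul (Lmat a) (sv_trans H1 (svS Ha)).
  by rewrite (sv_cong (Lcomp a k u) (LK a u)).
have := sv_mul (Lmat a) (sv_trans H2 (svS Hb)).
by rewrite (sv_cong (Lcomp a k v) (Lcomp a b v)).
Qed.
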